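(* Let $\mathrm{ReLU}:\mathbb{R}\to\mathbb{R}$ be $\mathrm{ReLU}(x)=\max(x,0)$, and let \[ \mathcal{X}:=\mathrm{Span}\left(\left\{\mathrm{ReLU}(a\,\cdot+b)\,:\, a\in\mathbb{R}\setminus\{0\},\ b\in\mathbb{R}\right\}\right), \] the set of all finite real linear combinations of the functions $x\mapsto \mathrm{ReLU}(ax+b)$ with $a\neq 0$, $b\in\mathbb{R}$. Let \[ \mathcal{Y}:=\left\{f\in C(\mathbb{R})\,:\, \lim_{x\to+\infty}\frac{f(x)}{1+|x|}\ \text{and}\ \lim_{x\to-\infty}\frac{f(x)}{1+|x|}\ \text{both exist in } \mathbb{R}\right\}, \] equipped with the norm \[ \|f\|_{\mathcal{Y}}:=\sup_{x\in\mathbb{R}}\frac{|f(x)|}{1+|x|}. \] Then $\mathcal{X}\subset\mathcal{Y}$ and $\mathcal{X}$ is dense in $\mathcal{Y}$ with respect to $\|\cdot\|_{\mathcal{Y}}$: for every $f\in\mathcal{Y}$ and every $\varepsilon>0$ there exists $h\in\mathcal{X}$ with $\|f-h\|_{\mathcal{Y}}<\varepsilon$.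
   Context: $C(\mathbb{R})$ denotes the space of continuous real-valued functions on $\mathbb{R}$. Elements of $\mathcal{X}$ are two-layer feed-forward neural networks with ReLU activation. *)

(* Defs.v *)
From HB Require Import structures.
From mathcomp Require Import all_boot all_order all_algebra.
From mathcomp Require Import all_classical all_reals all_analysis.
Set Implicit Arguments. Unset Strict Implicit. Unset Printing Implicit Defensive.
Import Order.TTheory GRing.Theory Num.Theory.
Import numFieldNormedType.Exports.
Local Open Scope classical_set_scope.
Local Open Scope ring_scope.

Definition relu {R : realType} (x : R) : R := Num.max x 0.

(* X = Span{ x |-> ReLU(a x + b) : a <> 0, b in R }: finite real linear
   combinations, encoded as a finite list of triples (c, a, b) with a <> 0. *)
Definition in_X {R : realType} (h : R -> R) : Prop :=
  exists s : seq (R * R * R),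
    (forall t, t \in s -> t.1.2 != 0) /\
    h = (fun x => \sum_(t <- s) t.1.1 * relu (t.1.2 * x + t.2)).

Definition wY {R : realType} (f : R -> R) (x : R) : R := f x / (1 + `|x|).

Definition in_Y {R : realType} (f : R -> R) : Prop :=
  continuous f /\
  (exists l : R, wY f x @[x --> +oo] --> l) /\
  (exists l : R, wY f x @[x --> -oo] --> l).

Definition normY {R : realType} (f : R -> R) : \bar R :=
  ereal_sup (range (fun x => (`|f x| / (1 + `|x|))%:E)).

Definition lt_e {R : realType} (a b : \bar R) : Prop := (a < b)%E.

(* Main.v *)
Require Import Defs.
From HB Require Import structures.
From mathcomp Require Import all_boot all_order all_algebra.
From mathcomp Require Import all_classical all_reals all_analysis.
From mathcomp Require Import ring lra.
Import Order.TTheory GRing.Theory Num.Theory.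
Import numFieldNormedType.Exports.
Local Open Scope classical_set_scope.
Local Open Scope ring_scope.
Section S.
Variable R : realType.
Lemma relu_cont : continuous (@relu R).
Proof.
move=> x; rewrite /relu.
have -> : (fun y : R => Num.max y 0) = (@id R) \max (fun=> 0) by [].
apply: continuous_max; [exact: cvg_id | exact: cvg_cst].
Qed.
Lemma term_cont c a b : continuous (fun x : R => c * relu (a * x + b)).
Proof.
move=> x.
apply: (@continuousM _ _ (fun=> c) (fun x => relu (a * x + b))); first exact: cvg_cst.
apply: (continuous_comp _ (relu_cont _)).
apply: (@continuousD _ _ _ (fun x => a * x) (fun=> b)); last exact: cvg_cst.
apply: (@continuousM _ _ (fun=> a) id); first exact: cvg_cst. exact: cvg_id.
Qed.

Lemma in_X_ext {f g : R -> R} : in_X f -> (forall x, f x = g x) -> in_X g.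
Proof. by move=> Hf e; have -> : g = f by apply: funext => x; rewrite e. Qed.

Lemma in_X0 : in_X (fun _ : R => 0).
Proof. exists [::]; split => //; apply: funext => x; by rewrite big_nil. Qed.

Lemma in_XD {f g : R -> R} : in_X f -> in_X g -> in_X (fun x => f x + g x).
Proof.
move=> [s1 [H1 ->]] [s2 [H2 ->]]; exists (s1 ++ s2); split.
  by move=> t; rewrite mem_cat => /orP[/H1|/H2].
by apply: funext => x; rewrite big_cat.
Qed.

Lemma in_XZ k {f : R -> R} : in_X f -> in_X (fun x => k * f x).
Proof.
move=> [s [H ->]]; exists (map (fun t => (k * t.1.1, t.1.2, t.2)) s); split.
  by move=> t /mapP[u /H Hu ->].
apply: funext => x; rewrite big_map mulr_sumr; apply: eq_bigr => t _ /=.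
by rewrite mulrA.
Qed.

Lemma in_X1 c a b : a != 0 -> in_X (fun x : R => c * relu (a * x + b)).
Proof.
move=> a0; exists [:: (c, a, b)]; split.
  by move=> t; rewrite inE => /eqP ->.
by apply: funext => x; rewrite big_seq1.
Qed.

Lemma relu_sub (u : R) : relu u - relu (- u) = u.
Proof.
rewrite /relu; case: (leP u 0) => h.
- rewrite max_l ?oppr_ge0 //; lra.
- rewrite max_r; last by rewrite oppr_le0 ltW.
  lra.
Qed.

Lemma in_Xc k : in_X (fun _ : R => k).
Proof.
have h1 : in_X (fun x : R => k * relu (1 * x + 1) + (- k) * relu ((-1) * x + (-1))).
  by apply: in_XD; apply: in_X1; rewrite ?oppr_eq0 oner_eq0.
have h2 : in_X (fun x : R => (- k) * relu (1 * x + 0) + k * relu ((-1) * x + 0)).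
  by apply: in_XD; apply: in_X1; rewrite ?oppr_eq0 oner_eq0.
apply: (in_X_ext (in_XD h1 h2)) => x /=.
have e1 := relu_sub (x + 1); have e2 := relu_sub x.
rewrite !mul1r !mulN1r !addr0; rewrite opprD in e1.
transitivity (k * ((relu (x + 1) - relu (- x - 1)) - (relu x - relu (- x)))); first by ring.
rewrite e1 e2; ring.
Qed.

Lemma in_X_cont (h : R -> R) : in_X h -> continuous h.
Proof.
move=> [s [_ ->]]; elim: s => [|t s IH].
  under eq_fun do rewrite big_nil. by move=> x; exact: cvg_cst.
under eq_fun do rewrite big_cons.
move=> x; apply: (@continuousD _ _ _ (fun x => t.1.1 * relu (t.1.2 * x + t.2))).
  exact: term_cont.
exact: IH.
Qed.
Lemma termP (a b : R) : a != 0 -> forall e, 0 < e -> exists M, forall x, M < x ->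
  `|relu (a * x + b) / (1 + `|x|) - relu a| < e.
Proof.
move=> a0 e e0; exists (`|b| / `|a| + (`|a| + `|b|) / e) => x Mx.
have na : 0 < `|a| by rewrite normr_gt0.
have h1 : 0 <= `|b| / `|a| by rewrite divr_ge0.
have h2 : 0 <= (`|a| + `|b|) / e by rewrite divr_ge0 // ltW.
have q1 : `|b| / `|a| * `|a| = `|b| by rewrite divfK // gt_eqF.
have q2 : (`|a| + `|b|) / e * e = `|a| + `|b| by rewrite divfK // gt_eqF.
have x0 : 0 < x by lra.
have hb : `|b| < `|a| * x by nra.
have he : `|a| + `|b| < e * x by nra.
rewrite (gtr0_norm x0).
have d0 : 0 < 1 + x by lra.
have b1 := ler_norm b; have b2 : - b <= `|b| by rewrite -normrN ler_norm.
case: (ltP 0 a) => ha.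
- rewrite (gtr0_norm ha) in hb he.
  have hp : 0 <= a * x + b by nra.
  rewrite /relu (max_l (ltW ha)) (max_l hp) ltr_distl; apply/andP; split.
  + rewrite ltr_pdivlMr //; nra.
  + rewrite ltr_pdivrMr //; nra.
- have ha' : a < 0 by rewrite lt_neqAle a0 ha.
  rewrite (ltr0_norm ha') in hb he.
  have hp : a * x + b <= 0 by nra.
  by rewrite /relu (max_r ha) (max_r hp) mul0r subr0 normr0.
Qed.

Lemma cvgPy (f : R -> R) l : (forall e, 0 < e -> exists M, forall x, M < x -> `|f x - l| < e) ->
  f x @[x --> +oo] --> l.
Proof.
move=> H; apply/cvgrPdist_lt => e e0; have [M HM] := H e e0.
exists M; split; first exact: num_real.
by move=> x Mx; rewrite distrC; exact: HM.
Qed.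

Lemma cvgNy (f : R -> R) l : (forall e, 0 < e -> exists M, forall x, M < x -> `|f (- x) - l| < e) ->
  f x @[x --> -oo] --> l.
Proof.
move=> H; apply/cvgrPdist_lt => e e0; have [M HM] := H e e0.
exists (- M); split; first exact: num_real.
move=> x Mx; rewrite distrC -(opprK x); apply: HM; by rewrite ltrNr.
Qed.

Lemma cvgPy_inv {f : R -> R} {l} : f x @[x --> +oo] --> l ->
  forall e, 0 < e -> exists M, forall x, M < x -> `|f x - l| < e.
Proof.
move/cvgrPdist_lt => H e e0; have [M [_ HM]] := H e e0.
by exists M => x Mx; rewrite distrC; exact: HM.
Qed.

Lemma cvgNy_inv {f : R -> R} {l} : f x @[x --> -oo] --> l ->
  forall e, 0 < e -> exists M, forall x, x < M -> `|f x - l| < e.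
Proof.
move/cvgrPdist_lt => H e e0; have [M [_ HM]] := H e e0.
by exists M => x Mx; rewrite distrC; exact: HM.
Qed.

Lemma term_limP c a b : a != 0 ->
  (fun x : R => c * relu (a * x + b) / (1 + `|x|)) x @[x --> +oo] --> c * relu a.
Proof.
move=> a0; under eq_fun do rewrite -mulrA.
apply: cvgMr; apply: cvgPy; exact: termP.
Qed.

Lemma term_limN c a b : a != 0 ->
  (fun x : R => c * relu (a * x + b) / (1 + `|x|)) x @[x --> -oo] --> c * relu (- a).
Proof.
move=> a0; under eq_fun do rewrite -mulrA.
apply: cvgMr; apply: cvgNy => e e0.
have [M HM] := @termP (- a) b (ltac:(by rewrite oppr_eq0)) e e0.
by exists M => x /HM; rewrite normrN mulrN mulNr.
Qed.

Lemma in_X_lim {s : seq (R * R * R)} : (forall t, t \in s -> t.1.2 != 0) ->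
  (exists l : R, (fun x : R => (\sum_(t <- s) t.1.1 * relu (t.1.2 * x + t.2)) / (1 + `|x|)) x @[x --> +oo] --> l) /\
  (exists l : R, (fun x : R => (\sum_(t <- s) t.1.1 * relu (t.1.2 * x + t.2)) / (1 + `|x|)) x @[x --> -oo] --> l).
Proof.
elim: s => [|t s IH] H.
  by split; exists 0; under eq_fun do rewrite big_nil mul0r; exact: cvg_cst.
have Ht : t.1.2 != 0 by apply: H; rewrite inE eqxx.
have [[l1 H1] [l2 H2]] : _ /\ _ := IH (fun u hu => H u (ltac:(by rewrite inE hu orbT))).
split.
- exists (t.1.1 * relu t.1.2 + l1); under eq_fun do rewrite big_cons mulrDl.
  exact: (cvgD (term_limP t.1.1 t.1.2 t.2 Ht) H1).
- exists (t.1.1 * relu (- t.1.2) + l2); under eq_fun do rewrite big_cons mulrDl.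
  exact: (cvgD (term_limN t.1.1 t.1.2 t.2 Ht) H2).
Qed.

Lemma part1 (h : R -> R) : in_X h -> in_Y h.
Proof.
move=> hX; split; first exact: in_X_cont.
move: hX => [s [Hs ->]]; have [[l1 H1] [l2 H2]] := in_X_lim Hs.
by split; [exists l1 | exists l2].
Qed.

Lemma relu0 (u : R) : u <= 0 -> relu u = 0.
Proof. by move=> h; rewrite /relu max_r. Qed.
Lemma relu1 (u : R) : 0 <= u -> relu u = u.
Proof. by move=> h; rewrite /relu max_l. Qed.

Definition Pt (g : R -> R) (a e t : R) := exists p : R -> R, in_X p /\
  (forall x, x <= a -> p x = g a) /\ (forall x, t <= x -> p x = g t) /\
  (forall x, a <= x -> x <= t -> `|g x - p x| <= e).

Lemma Pt_ext {g a e t t'} : Pt g a e t -> a <= t -> t <= t' ->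
  (forall x, t <= x -> x <= t' -> `|g x - g t| <= e /\ `|g x - g t'| <= e) ->
  Pt g a e t'.
Proof.
move=> [p [pX [pa [pt pe]]]] at0 tt' H.
case: (eqVneq t t') => [<-|ne]; first by exists p.
have lt : t < t' by rewrite lt_neqAle ne tt'.
have dn : t' - t != 0 by rewrite subr_eq0 eq_sym.
pose c := (g t' - g t) / (t' - t).
have hc : c * (t' - t) = g t' - g t by rewrite /c divfK.
exists (fun x => p x + (c * relu (1 * x + - t) + (- c) * relu (1 * x + - t'))).
split.
  apply: in_XD => //; apply: in_XD; apply: in_X1; exact: oner_neq0.
split.
  move=> x xa; rewrite pa // !mul1r !relu0; first (rewrite !mulr0; ring); lra.
split.
  move=> x xt'; rewrite pt; last lra.
  rewrite !mul1r !relu1; try lra.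
move=> x ax xt'; case: (leP x t) => xt.
  rewrite !mul1r !relu0; try lra.
  rewrite !mulr0 !addr0; exact: pe.
rewrite pt; last exact: ltW.
rewrite !mul1r relu1; last lra. rewrite relu0; last lra.
have [A B] := H x (ltW xt) xt'.
pose l := (x - t) / (t' - t).
have l0 : 0 <= l by rewrite /l divr_ge0 // subr_ge0 ltW.
have l1 : l <= 1 by rewrite /l ler_pdivrMr ?subr_gt0 // mul1r lerB.
have -> : g x - (g t + (c * (x + - t) + - c * 0)) = (1 - l) * (g x - g t) + l * (g x - g t').
  rewrite /l /c; field; exact: dn.
have n1 : `|1 - l| = 1 - l by apply: ger0_norm; lra.
apply: (le_trans (ler_normD _ _)); rewrite (normrM (1 - l)) (normrM l) n1 (ger0_norm l0).
nra.
Qed.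

Lemma PL_approx g a b e : continuous g -> a <= b -> 0 < e -> Pt g a e b.
Proof.
move=> gc ab e0.
pose S := [set t | a <= t /\ t <= b /\ Pt g a e t].
have Sa : S a.
  split => //; split => //; exists (fun _ => g a); split; first exact: in_Xc.
  split => //; split => // x ax xa.
  have -> : x = a by apply/le_anti; rewrite ax xa.
  by rewrite subrr normr0 ltW.
have hs : has_sup S.
  by split; [exists a | exists b => y [_ []]].
have as0 : a <= sup S by exact: sup_upper_bound.
have sb : sup S <= b by apply: ge_sup; [exists a | move=> y [_ []]].
have := gc (sup S); move/cvgrPdist_lt => /(_ (e / 2)) H.
have e2 : 0 < e / 2 by rewrite divr_gt0.
move: (H e2) => /nbhs_ballP [d /= d0 Hd].
have [t St ht] := sup_adherent d0 hs.
have ts : t <= sup S by exact: sup_upper_bound.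
move: St => [at0 [tb Pt0]].
pose t' := Num.min b (sup S + d / 2).
have d2 : 0 < d / 2 by rewrite divr_gt0.
have t'b : t' <= b by rewrite /t' ge_min lexx.
have t's : t' <= sup S + d / 2 by rewrite /t' ge_min lexx orbT.
have tt' : t <= t' by rewrite /t' le_min tb /=; lra.
have inball : forall x, t <= x -> x <= t' -> `|g (sup S) - g x| < e / 2.
  move=> x h1 h2; apply: (Hd x); rewrite /ball /=.
  rewrite ltr_distl; apply/andP; split; lra.
have Pt' : Pt g a e t'.
  apply: (Pt_ext Pt0) => // x h1 h2.
  have Ax := inball x h1 h2; have At := inball t (lexx t) tt'.
  have At' := inball t' tt' (lexx t').
  have E1 : g x - g t = (g (sup S) - g t) - (g (sup S) - g x) by ring.
  have E2 : g x - g t' = (g (sup S) - g t') - (g (sup S) - g x) by ring.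
  rewrite E1 E2; split; apply: (le_trans (ler_normB _ _)); lra.
have St' : S t' by split; [lra | split].
have := sup_upper_bound hs St'; rewrite -/t' => t'le.
case: (leP b (sup S + d / 2)) => hb.
  by move: Pt'; rewrite /t' (min_l hb).
by move: t'le; rewrite /t' (min_r (ltW hb)); lra.
Qed.

Lemma wbound {f : R -> R} {y l eta} : `|wY f y - l| < eta ->
  `|f y - l * (1 + `|y|)| <= eta * (1 + `|y|).
Proof.
move=> h; have d0 : 0 < 1 + `|y| by rewrite ltr_pwDl.
have -> : f y - l * (1 + `|y|) = (wY f y - l) * (1 + `|y|).
  rewrite /wY; field; by rewrite gt_eqF.
rewrite normrM (gtr0_norm d0); apply: ler_wpM2r; [exact: ltW | exact: ltW].
Qed.

Lemma part2 (f : R -> R) : in_Y f -> forall eps : R, 0 < eps ->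
  exists h : R -> R, in_X h /\ lt_e (normY (fun x => f x - h x)) (eps%:E).
Proof.
move=> [fc [[L1 H1] [L2 H2]]] e e0.
have e4 : 0 < e / 4 by rewrite divr_gt0.
have [M1 HM1] := cvgPy_inv H1 _ e4.
have [M2 HM2] := cvgNy_inv H2 _ e4.
pose M := 1 + `|M1| + `|M2|.
have hM : M = 1 + `|M1| + `|M2| by [].
have m1 := ler_norm M1; have m2 : - M2 <= `|M2| by rewrite -normrN ler_norm.
have n1 := normr_ge0 M1; have n2 := normr_ge0 M2.
pose q := fun x : R => L1 * relu (1 * x + 0) + L2 * relu ((-1) * x + 0).
pose g := fun x => f x - q x.
have qX : in_X q.
  by apply: in_XD; apply: in_X1; rewrite ?oppr_eq0 oner_eq0.
have gc : continuous g.
  move=> x; exact: (continuousB (fc x) (in_X_cont _ qX x)).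
have MM : - M <= M by lra.
have e2 : 0 < e / 2 by rewrite divr_gt0.
have [p [pX [pa [pb pe]]]] := PL_approx _ _ _ _ gc MM e2.
exists (fun x => q x + p x); split; first exact: in_XD.
have key : forall x, `|g x - p x| <= e / 2 * (1 + `|x|).
  move=> x; have nx := normr_ge0 x.
  case: (ltP M x) => hx.
    have x0 : 0 < x by lra.
    rewrite pb; last exact: ltW.
    have A := wbound (HM1 x ltac:(lra)).
    have B := wbound (HM1 M ltac:(lra)).
    rewrite (gtr0_norm x0) in A *. rewrite (@gtr0_norm _ M) in B; last lra.
    have -> : g x - g M = (f x - L1 * (1 + x)) - (f M - L1 * (1 + M)).
      have r1 : relu x = x by apply: relu1; lra.
      have r2 : relu M = M by apply: relu1; lra.
      have r3 : relu (- x) = 0 by apply: relu0; lra.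
      have r4 : relu (- M) = 0 by apply: relu0; lra.
      rewrite /g /q !mul1r !mulN1r !addr0 r1 r2 r3 r4; ring.
    have : e / 4 * (1 + M) <= e / 4 * (1 + x) by apply: ler_wpM2l; lra.
    move=> hh; apply: (le_trans (ler_normB _ _)); lra.
  case: (ltP x (- M)) => hx2.
    have x0 : x < 0 by lra.
    rewrite pa; last exact: ltW.
    have A := wbound (HM2 x ltac:(lra)).
    have B := wbound (HM2 (- M) ltac:(lra)).
    rewrite (ltr0_norm x0) in A *. rewrite normrN (@gtr0_norm _ M) in B; last lra.
    have -> : g x - g (- M) = (f x - L2 * (1 + - x)) - (f (- M) - L2 * (1 + M)).
      have r1 : relu x = 0 by apply: relu0; lra.
      have r2 : relu (- M) = 0 by apply: relu0; lra.
      have r3 : relu (- x) = - x by apply: relu1; lra.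
      have r4 : relu (- - M) = M by rewrite opprK; apply: relu1; lra.
      rewrite /g /q !mul1r !mulN1r !addr0 r1 r2 r3 r4; ring.
    have : e / 4 * (1 + M) <= e / 4 * (1 + - x) by apply: ler_wpM2l; lra.
    move=> hh; apply: (le_trans (ler_normB _ _)); lra.
  apply: (le_trans (pe x hx2 hx)); nra.
rewrite /lt_e /normY.
apply: (@le_lt_trans _ _ (e / 2)%:E); last by rewrite lte_fin; lra.
apply/ereal_supP => _ [x _ <-]; rewrite lee_fin.
have d0 : 0 < 1 + `|x| by rewrite ltr_pwDl.
rewrite ler_pdivrMr //.
have -> : f x - (q x + p x) = g x - p x by rewrite /g; ring.
exact: key.
Qed.
End S.

Theorem theorem1p1 (R : realType) :
  (forall h : R -> R, in_X h -> in_Y h) /\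
  (forall f : R -> R, in_Y f ->
     forall eps : R, 0 < eps ->
       exists h : R -> R, in_X h /\ lt_e (normY (fun x => f x - h x)) (eps%:E)).
Proof. split; [exact: part1 | exact: part2]. Qed.
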